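(* Let $X$ be a collectionwise normal Tychonoff space containing a non-trivial convergent sequence. If $F(X)$ has a $\mathfrak{G}$-base, then $X$ is $\aleph_1$-compact. *)

(* Defs.v *)
From Stdlib Require Import Reals List Classical ClassicalEpsilon.
Import ListNotations.
Open Scope R_scope.

Set Implicit Arguments.

Definition is_topology (T : Type) (op : (T -> Prop) -> Prop) : Prop :=
  op (fun _ => True) /\
  (forall U V, op U -> op V -> op (fun x => U x /\ V x)) /\
  (forall (I : Type) (U : I -> T -> Prop),
      (forall i, op (U i)) -> op (fun x => exists i, U i x)).

Definition closed (T : Type) (op : (T -> Prop) -> Prop) (A : T -> Prop) : Prop :=
  op (fun x => ~ A x).

Definition subset (T : Type) (A B : T -> Prop) : Prop := forall x, A x -> B x.

Definition T1 (T : Type) (op : (T -> Prop) -> Prop) : Prop :=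
  forall x y : T, x <> y -> exists W, op W /\ W y /\ ~ W x.

Definition continuous_real (T : Type) (op : (T -> Prop) -> Prop) (f : T -> R) : Prop :=
  forall x eps, 0 < eps ->
    exists W, op W /\ W x /\ forall z, W z -> Rabs (f z - f x) < eps.

Definition tychonoff (T : Type) (op : (T -> Prop) -> Prop) : Prop :=
  T1 op /\
  forall (A : T -> Prop) (x : T), closed op A -> ~ A x ->
    exists f : T -> R, continuous_real op f /\
      (forall z, 0 <= f z <= 1) /\ f x = 0 /\ (forall a, A a -> f a = 1).

Definition discrete_family (T : Type) (op : (T -> Prop) -> Prop)
    (I : Type) (F : I -> T -> Prop) : Prop :=
  forall x, exists W, op W /\ W x /\
    forall i j, (exists z, W z /\ F i z) -> (exists z, W z /\ F j z) -> i = j.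

Definition collectionwise_normal (T : Type) (op : (T -> Prop) -> Prop) : Prop :=
  T1 op /\
  forall (I : Type) (F : I -> T -> Prop),
    (forall i, closed op (F i)) -> discrete_family op F ->
    exists V : I -> T -> Prop,
      (forall i, op (V i)) /\ (forall i, subset (F i) (V i)) /\ discrete_family op V.

Definition converges (T : Type) (op : (T -> Prop) -> Prop) (s : nat -> T) (p : T) : Prop :=
  forall W, op W -> W p -> exists N, forall n, (N <= n)%nat -> W (s n).

Definition has_nontrivial_convergent_seq (T : Type) (op : (T -> Prop) -> Prop) : Prop :=
  exists (s : nat -> T) (p : T),
    (forall m n, s m = s n -> m = n) /\ (forall n, s n <> p) /\ converges op s p.

Definition countable (T : Type) (A : T -> Prop) : Prop :=
  exists f : T -> nat, forall a b, A a -> A b -> f a = f b -> a = b.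

Definition accumulation_point (T : Type) (op : (T -> Prop) -> Prop) (A : T -> Prop) (p : T) : Prop :=
  forall W, op W -> W p -> exists z, W z /\ A z /\ z <> p.

Definition aleph1_compact (T : Type) (op : (T -> Prop) -> Prop) : Prop :=
  forall A : T -> Prop, ~ countable A -> exists p, accumulation_point op A p.

Section FreeGroup.
Variable X : Type.

Definition letter := (X * bool)%type.

Definition cancelsP (a b : letter) : Prop := fst a = fst b /\ snd a <> snd b.

Fixpoint reduced (w : list letter) : Prop :=
  match w with
  | a :: ((b :: _) as w') => ~ cancelsP a b /\ reduced w'
  | _ => True
  end.

Definition push (a : letter) (w : list letter) : list letter :=
  match w with
  | b :: w' => if excluded_middle_informative (cancelsP a b) then w' else a :: w
  | nil => [a]
  end.

Definition reduce (w : list letter) : list letter := fold_right push nil w.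

Lemma push_reduced a w : reduced w -> reduced (push a w).
Proof.
  destruct w as [|b w']; simpl; [tauto|].
  intro H. destruct (excluded_middle_informative (cancelsP a b)) as [Hc|Hc].
  - destruct w'; simpl in *; tauto.
  - simpl. split; assumption.
Qed.

Lemma reduce_reduced w : reduced (reduce w).
Proof.
  induction w as [|a w IH]; simpl; [exact I|]. apply push_reduced, IH.
Qed.

Definition FA : Type := { w : list letter | reduced w }.

Definition FA_one : FA := exist _ nil I.

Definition FA_mul (u v : FA) : FA :=
  exist _ (reduce (proj1_sig u ++ proj1_sig v)) (reduce_reduced _).

Definition flip (a : letter) : letter := (fst a, negb (snd a)).

Definition FA_inv (u : FA) : FA :=
  exist _ (reduce (rev (map flip (proj1_sig u)))) (reduce_reduced _).

Definition FA_of (x : X) : FA := exist _ [(x, true)] I.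

End FreeGroup.

Definition is_group_topology (X : Type) (op : (FA X -> Prop) -> Prop) : Prop :=
  is_topology op /\
  (forall a b W, op W -> W (FA_mul a b) ->
     exists U V, op U /\ op V /\ U a /\ V b /\
       forall u v, U u -> V v -> W (FA_mul u v)) /\
  (forall W, op W -> op (fun g => W (FA_inv g))).

(** Neighbourhoods of the identity in the (Markov) free topological group F(X):
    the topology of F(X) is the finest group topology on FA(X) making
    X -> FA(X) continuous, i.e. the supremum of all such group topologies.
    Since this family is closed under finite suprema, a set is a
    neighbourhood of e in F(X) iff it is a neighbourhood of e in one of them. *)
Definition free_nbhd_one (X : Type) (tau : (X -> Prop) -> Prop) (U : FA X -> Prop) : Prop :=
  exists op : (FA X -> Prop) -> Prop,
    is_group_topology op /\
    (forall W, op W -> tau (fun x => W (FA_of x))) /\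
    exists W, op W /\ W (FA_one X) /\ subset W U.

Definition free_group_has_G_base (X : Type) (tau : (X -> Prop) -> Prop) : Prop :=
  exists U : (nat -> nat) -> FA X -> Prop,
    (forall alpha, free_nbhd_one tau (U alpha)) /\
    (forall alpha beta, (forall n, (alpha n <= beta n)%nat) -> subset (U beta) (U alpha)) /\
    (forall V, free_nbhd_one tau V -> exists alpha, subset (U alpha) V).

(* Main.v *)
Require Import Defs.
From Stdlib Require Import Reals List Classical ClassicalEpsilon Lra Lia Cantor.
From Stdlib Require Import FunctionalExtensionality PropExtensionality.
Import ListNotations.
Open Scope R_scope.

Section Topo.
Variable T : Type.
Variable tau : (T -> Prop) -> Prop.
Hypothesis Htop : is_topology tau.

Lemma open_local (S : T -> Prop) :
  (forall x, S x -> exists W, tau W /\ W x /\ subset W S) -> tau S.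
Proof.
  destruct Htop as [Ht [Hi Hu]]. intro H.
  assert (Hc: forall i : {x | S x}, {W | tau W /\ W (proj1_sig i) /\ subset W S}).
  { intro i. apply constructive_indefinite_description. apply H. apply proj2_sig. }
  set (Wf := fun i => proj1_sig (Hc i)).
  assert (E: S = fun y => exists i, Wf i y).
  { apply functional_extensionality; intro y; apply propositional_extensionality; split.
    - intro Hy. exists (exist _ y Hy). unfold Wf; destruct (Hc _) as [W [? [? ?]]]; simpl; auto.
    - intros [i Hi']. unfold Wf in Hi'. destruct (Hc i) as [W [? [? Hs]]]; simpl in Hi'; auto. }
  rewrite E. apply Hu. intro i. unfold Wf; destruct (Hc i); simpl; tauto.
Qed.

Lemma fin_inter (x : T) (Q : nat -> T -> Prop) (N : nat) :
  (forall m, (m < N)%nat -> exists W, tau W /\ W x /\ forall z, W z -> Q m z) ->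
  exists W, tau W /\ W x /\ forall z, W z -> forall m, (m < N)%nat -> Q m z.
Proof.
  destruct Htop as [Ht [Hi Hu]].
  induction N as [|N IH]; intro H.
  - exists (fun _ => True). split; [exact Ht|]. split; [exact I|]. intros; lia.
  - destruct IH as [W1 [H1 [H1x H1q]]]. { intros m Hm. apply H. lia. }
    destruct (H N) as [W2 [H2 [H2x H2q]]]. lia.
    exists (fun z => W1 z /\ W2 z). split; [apply Hi; auto|]. split; [auto|].
    intros z [Hz1 Hz2] m Hm. destruct (Nat.eq_dec m N) as [->|Hne]; auto.
    apply H1q; auto; lia.
Qed.

Lemma inter_open (U V : T -> Prop) : tau U -> tau V -> tau (fun x => U x /\ V x).
Proof. destruct Htop as [_ [Hi _]]. auto. Qed.

Lemma singleton_closed (b : T) : T1 tau -> closed tau (fun x => x = b).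
Proof.
  intro HT. unfold closed. apply open_local. intros x Hx.
  destruct (HT b x) as [W [HW [HWx HWb]]]. { intro E; apply Hx; auto. }
  exists W. split; auto. split; auto. intros z Hz E. subst. auto.
Qed.

End Topo.
Arguments open_local {T tau} Htop S.
Arguments fin_inter {T tau} Htop x Q N.
Arguments inter_open {T tau} Htop U V.
Arguments singleton_closed {T tau} Htop b.

Lemma countable_union (T : Type) (A : T -> Prop) (P : nat -> T -> Prop) :
  (forall n, countable (P n)) -> (forall a, A a -> exists n, P n a) -> countable A.
Proof.
  intros HP HA.
  assert (Hc : forall n, {f : T -> nat | forall a b, P n a -> P n b -> f a = f b -> a = b}).
  { intro n. apply constructive_indefinite_description. apply HP. }
  set (N := fun a => epsilon (inhabits 0%nat) (fun n => P n a)).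
  exists (fun a => to_nat (N a, proj1_sig (Hc (N a)) a)).
  intros a b Ha Hb E.
  apply (f_equal of_nat) in E. rewrite !cancel_of_to in E. injection E as E1 E2.
  assert (Pa : P (N a) a) by (apply (epsilon_spec (inhabits 0%nat) (fun n => P n a)); auto).
  assert (Pb : P (N b) b) by (apply (epsilon_spec (inhabits 0%nat) (fun n => P n b)); auto).
  rewrite <- E1 in Pb, E2. destruct (Hc (N a)) as [f Hf]. simpl in E2. eauto.
Qed.

Lemma countable_single (T : Type) (y : T) : countable (fun x => x = y).
Proof. exists (fun _ => 0%nat). intros a b -> -> _. auto. Qed.

Lemma countable_sub (T : Type) (A B : T -> Prop) : subset A B -> countable B -> countable A.
Proof. intros S [f Hf]. exists f. intros; eauto. Qed.

Lemma countable_list (T : Type) (L : list T) (P : T -> Prop) :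
  (forall x, P x -> In x L) -> countable P.
Proof.
  intro H. apply (@countable_union T P (fun n x => nth_error L n = Some x)).
  - intro n. exists (fun _ => 0%nat). intros a b Ha Hb _. rewrite Ha in Hb. injection Hb; auto.
  - intros a Ha. apply In_nth_error. auto.
Qed.

Definition H : Type := (R * R * R)%type.
Definition h1 (z : H) : R := fst (fst z).
Definition h2 (z : H) : R := snd (fst z).
Definition h3 (z : H) : R := snd z.
Definition hmul (x y : H) : H :=
  (h1 x + h1 y, h2 x + h2 y, h3 x + h3 y + h1 x * h2 y).
Definition hinv (x : H) : H := (- h1 x, - h2 x, - h3 x + h1 x * h2 x).
Definition hone : H := (0, 0, 0).

Lemma H_ext (x y : H) : h1 x = h1 y -> h2 x = h2 y -> h3 x = h3 y -> x = y.
Proof. destruct x as [[a b] c], y as [[a' b'] c']; unfold h1, h2, h3; simpl; intros -> -> ->; auto. Qed.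

Ltac hsolve := apply H_ext; unfold hmul, hinv, hone, h1, h2, h3; simpl; ring.

Lemma hmul_assoc x y z : hmul (hmul x y) z = hmul x (hmul y z). Proof. hsolve. Qed.
Lemma hmul_1l x : hmul hone x = x. Proof. hsolve. Qed.
Lemma hmul_1r x : hmul x hone = x. Proof. hsolve. Qed.
Lemma hmul_Vl x : hmul (hinv x) x = hone. Proof. hsolve. Qed.
Lemma hmul_Vr x : hmul x (hinv x) = hone. Proof. hsolve. Qed.
Lemma hinv_inv x : hinv (hinv x) = x. Proof. hsolve. Qed.
Lemma hinv_mul x y : hinv (hmul x y) = hmul (hinv y) (hinv x). Proof. hsolve. Qed.

Definition near (e : R) (z w : H) : Prop :=
  Rabs (h1 w - h1 z) < e /\ Rabs (h2 w - h2 z) < e /\ Rabs (h3 w - h3 z) < e.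

Lemma near_refl e z : 0 < e -> near e z z.
Proof. intro. unfold near. rewrite !Rminus_diag, Rabs_R0. auto. Qed.

Lemma abs_tri x y z : Rabs (x - z) <= Rabs (x - y) + Rabs (y - z).
Proof. replace (x - z) with ((x - y) + (y - z)) by ring. apply Rabs_triang. Qed.

Lemma near_open d z w : near d z w -> exists e, 0 < e /\ forall w', near e w w' -> near d z w'.
Proof.
  unfold near. intros [H1 [H2 H3]].
  exists (Rmin (d - Rabs (h1 w - h1 z)) (Rmin (d - Rabs (h2 w - h2 z)) (d - Rabs (h3 w - h3 z)))).
  split.
  - repeat apply Rmin_glb_lt; lra.
  - intros w' [G1 [G2 G3]].
    pose proof (Rmin_l (d - Rabs (h1 w - h1 z)) (Rmin (d - Rabs (h2 w - h2 z)) (d - Rabs (h3 w - h3 z)))).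
    pose proof (Rmin_r (d - Rabs (h1 w - h1 z)) (Rmin (d - Rabs (h2 w - h2 z)) (d - Rabs (h3 w - h3 z)))).
    pose proof (Rmin_l (d - Rabs (h2 w - h2 z)) (d - Rabs (h3 w - h3 z))).
    pose proof (Rmin_r (d - Rabs (h2 w - h2 z)) (d - Rabs (h3 w - h3 z))).
    pose proof (abs_tri (h1 w') (h1 w) (h1 z)).
    pose proof (abs_tri (h2 w') (h2 w) (h2 z)).
    pose proof (abs_tri (h3 w') (h3 w) (h3 z)).
    repeat split; lra.
Qed.

Lemma near_mono e e' z w : near e z w -> e <= e' -> near e' z w.
Proof. unfold near; intros [? [? ?]] ?; repeat split; lra. Qed.

Lemma prod_bound x y a b d :
  Rabs (x - a) < d -> Rabs (y - b) < d -> d <= 1 ->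
  Rabs (x * y - a * b) <= d * (Rabs a + Rabs b + 1).
Proof.
  intros Hx Hy Hd.
  replace (x * y - a * b) with ((x - a) * (y - b) + (a * (y - b) + (x - a) * b)) by ring.
  pose proof (Rabs_triang ((x - a) * (y - b)) (a * (y - b) + (x - a) * b)).
  pose proof (Rabs_triang (a * (y - b)) ((x - a) * b)).
  rewrite !Rabs_mult in *.
  pose proof (Rabs_pos (x - a)). pose proof (Rabs_pos (y - b)).
  pose proof (Rabs_pos a). pose proof (Rabs_pos b).
  assert (Rabs (x - a) * Rabs (y - b) <= d * 1) by (apply Rmult_le_compat; lra).
  assert (Rabs a * Rabs (y - b) <= Rabs a * d) by (apply Rmult_le_compat_l; lra).
  assert (Rabs (x - a) * Rabs b <= d * Rabs b) by (apply Rmult_le_compat_r; lra).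
  nra.
Qed.

Lemma hmul_cont z1 z2 e : 0 < e -> exists d, 0 < d /\
  forall w1 w2, near d z1 w1 -> near d z2 w2 -> near e (hmul z1 z2) (hmul w1 w2).
Proof.
  intro He. set (K := Rabs (h1 z1) + Rabs (h2 z2) + 1).
  assert (HK : 1 <= K) by (unfold K; pose proof (Rabs_pos (h1 z1)); pose proof (Rabs_pos (h2 z2)); lra).
  exists (Rmin 1 (e / (3 + K))). split.
  { apply Rmin_glb_lt; [lra|]. apply Rdiv_lt_0_compat; lra. }
  set (d := Rmin 1 (e / (3 + K))).
  assert (Hd1 : d <= 1) by apply Rmin_l.
  assert (Hd2 : d * (3 + K) <= e).
  { assert (Hq : d <= e / (3 + K)) by apply Rmin_r.
    apply Rmult_le_compat_r with (r := 3 + K) in Hq; [|lra].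
    unfold Rdiv in Hq. rewrite Rmult_assoc, Rinv_l, Rmult_1_r in Hq; lra. }
  assert (Hd0 : 0 < d) by (apply Rmin_glb_lt; [lra|]; apply Rdiv_lt_0_compat; lra).
  assert (Hd3 : 4 * d <= e) by nra.
  intros w1 w2 [A1 [A2 A3]] [B1 [B2 B3]].
  pose proof (prod_bound (h1 w1) (h2 w2) (h1 z1) (h2 z2) d A1 B2 Hd1) as P.
  fold K in P.
  unfold near, hmul, h1, h2, h3 in *; simpl in *.
  split; [|split].
  - replace (fst (fst w1) + fst (fst w2) - (fst (fst z1) + fst (fst z2))) with
      ((fst (fst w1) - fst (fst z1)) + (fst (fst w2) - fst (fst z2))) by ring.
    eapply Rle_lt_trans; [apply Rabs_triang|]. lra.
  - replace (snd (fst w1) + snd (fst w2) - (snd (fst z1) + snd (fst z2))) with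
      ((snd (fst w1) - snd (fst z1)) + (snd (fst w2) - snd (fst z2))) by ring.
    eapply Rle_lt_trans; [apply Rabs_triang|]. lra.
  - match goal with |- Rabs ?E < _ => replace E with
      ((snd w1 - snd z1) + ((snd w2 - snd z2) + (fst (fst w1) * snd (fst w2) - fst (fst z1) * snd (fst z2)))) by ring end.
    eapply Rle_lt_trans; [apply Rabs_triang|].
    eapply Rle_lt_trans; [apply Rplus_le_compat_l; apply Rabs_triang|]. lra.
Qed.

Lemma hinv_cont z e : 0 < e -> exists d, 0 < d /\
  forall w, near d z w -> near e (hinv z) (hinv w).
Proof.
  intro He. set (K := Rabs (h1 z) + Rabs (h2 z) + 1).
  assert (HK : 1 <= K) by (unfold K; pose proof (Rabs_pos (h1 z)); pose proof (Rabs_pos (h2 z)); lra).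
  exists (Rmin 1 (e / (3 + K))). split.
  { apply Rmin_glb_lt; [lra|]. apply Rdiv_lt_0_compat; lra. }
  set (d := Rmin 1 (e / (3 + K))).
  assert (Hd1 : d <= 1) by apply Rmin_l.
  assert (Hd2 : d * (3 + K) <= e).
  { assert (Hq : d <= e / (3 + K)) by apply Rmin_r.
    apply Rmult_le_compat_r with (r := 3 + K) in Hq; [|lra].
    unfold Rdiv in Hq. rewrite Rmult_assoc, Rinv_l, Rmult_1_r in Hq; lra. }
  assert (Hd0 : 0 < d) by (apply Rmin_glb_lt; [lra|]; apply Rdiv_lt_0_compat; lra).
  assert (Hd3 : 4 * d <= e) by nra.
  intros w [A1 [A2 A3]].
  pose proof (prod_bound (h1 w) (h2 w) (h1 z) (h2 z) d A1 A2 Hd1) as P.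
  fold K in P.
  unfold near, hinv, h1, h2, h3 in *; simpl in *.
  split; [|split].
  - replace (- fst (fst w) - - fst (fst z)) with (- (fst (fst w) - fst (fst z))) by ring.
    rewrite Rabs_Ropp. lra.
  - replace (- snd (fst w) - - snd (fst z)) with (- (snd (fst w) - snd (fst z))) by ring.
    rewrite Rabs_Ropp. lra.
  - match goal with |- Rabs ?E < _ => replace E with
      (- (snd w - snd z) + (fst (fst w) * snd (fst w) - fst (fst z) * snd (fst z))) by ring end.
    eapply Rle_lt_trans; [apply Rabs_triang|]. rewrite Rabs_Ropp. lra.
Qed.

Section FreeHom.
Variable X : Type.
Variable iota : X -> H.

Definition phi (l : letter X) : H := if snd l then iota (fst l) else hinv (iota (fst l)).
Definition hw (w : list (letter X)) : H := fold_right (fun l acc => hmul (phi l) acc) hone w.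

Lemma hw_push a w : hw (push a w) = hmul (phi a) (hw w).
Proof.
  destruct w as [|b w']; simpl.
  - reflexivity.
  - destruct (excluded_middle_informative (cancelsP a b)) as [[E1 E2]|Hc]; simpl; [|reflexivity].
    rewrite <- hmul_assoc.
    destruct a as [x sa], b as [y sb]; unfold phi; simpl in *; subst.
    destruct sa, sb; try (exfalso; apply E2; reflexivity).
    + rewrite hmul_Vr, hmul_1l; reflexivity.
    + rewrite hmul_Vl, hmul_1l; reflexivity.
Qed.

Lemma hw_reduce w : hw (reduce w) = hw w.
Proof. induction w as [|a w IH]; simpl; [reflexivity|]. rewrite hw_push, IH. reflexivity. Qed.

Lemma hw_app l1 l2 : hw (l1 ++ l2) = hmul (hw l1) (hw l2).
Proof.
  induction l1 as [|a l IH]; simpl. - rewrite hmul_1l; auto. - rewrite IH, hmul_assoc; auto.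
Qed.

Lemma hw_rev_flip l : hw (rev (map (@flip X) l)) = hinv (hw l).
Proof.
  induction l as [|a l IH]; simpl.
  - apply H_ext; unfold hinv, hone, h1, h2, h3; simpl; ring.
  - rewrite hw_app, IH. simpl. rewrite hmul_1r, hinv_mul.
    f_equal. destruct a as [x [|]]; unfold phi; simpl; auto. rewrite hinv_inv; auto.
Qed.

Definition hF (g : FA X) : H := hw (proj1_sig g).

Lemma hF_mul u v : hF (FA_mul u v) = hmul (hF u) (hF v).
Proof. unfold hF, FA_mul; simpl. rewrite hw_reduce, hw_app. reflexivity. Qed.
Lemma hF_inv u : hF (FA_inv u) = hinv (hF u).
Proof. unfold hF, FA_inv; simpl. rewrite hw_reduce, hw_rev_flip. reflexivity. Qed.
Lemma hF_of x : hF (FA_of x) = iota x.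
Proof. unfold hF, FA_of; simpl. apply hmul_1r. Qed.
Lemma hF_one : hF (FA_one X) = hone.
Proof. reflexivity. Qed.

Definition op_h (W : FA X -> Prop) : Prop :=
  forall g, W g -> exists e, 0 < e /\ forall g', near e (hF g) (hF g') -> W g'.

Lemma ball_open d g0 : op_h (fun g => near d (hF g0) (hF g)).
Proof. intros g Hg. destruct (near_open _ _ _ Hg) as [e [He He']]. exists e; auto. Qed.

Lemma op_h_group : is_group_topology op_h.
Proof.
  split; [split; [|split]|split].
  - intros g _. exists 1. split; [lra|]. auto.
  - intros U V HU HV g [Ug Vg]. destruct (HU g Ug) as [e1 [He1 H1]]. destruct (HV g Vg) as [e2 [He2 H2]].
    exists (Rmin e1 e2). split; [apply Rmin_glb_lt; auto|].
    intros g' Hn. split; [apply H1 | apply H2]; eapply near_mono; eauto; [apply Rmin_l | apply Rmin_r].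
  - intros I U HU g [i Hi]. destruct (HU i g Hi) as [e [He H1]]. exists e. split; auto.
    intros g' Hg'. exists i. auto.
  - intros a b W HW Wab. destruct (HW _ Wab) as [e [He H1]].
    destruct (hmul_cont (hF a) (hF b) e He) as [d [Hd H2]].
    exists (fun g => near d (hF a) (hF g)), (fun g => near d (hF b) (hF g)).
    split; [apply ball_open|]. split; [apply ball_open|].
    split; [apply near_refl; auto|]. split; [apply near_refl; auto|].
    intros u v Hu Hv. apply H1. rewrite !hF_mul. auto.
  - intros W HW g Wg. destruct (HW _ Wg) as [e [He H1]].
    destruct (hinv_cont (hF g) e He) as [d [Hd H2]].
    exists d. split; auto. intros g' Hg'. apply H1. rewrite !hF_inv. auto.
Qed.

End FreeHom.
Arguments phi {X} iota l.
Arguments hw {X} iota w.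
Arguments hF {X} iota g.
Arguments op_h {X} iota W.

Section Embed.
Variable X : Type.
Variable tau : (X -> Prop) -> Prop.
Hypothesis Htop : is_topology tau.
Variables t u : X -> R.
Hypothesis Ht : continuous_real tau t.
Hypothesis Hu : continuous_real tau u.

Definition iota_tu (x : X) : H := (t x, u x, 0).

Lemma op_h_embed : forall W, op_h iota_tu W -> tau (fun x => W (FA_of x)).
Proof.
  intros W HW. apply (open_local Htop). intros x Wx.
  destruct (HW _ Wx) as [e [He H1]].
  destruct (Ht x e He) as [W1 [O1 [W1x Q1]]].
  destruct (Hu x e He) as [W2 [O2 [W2x Q2]]].
  exists (fun z => W1 z /\ W2 z). split; [apply (inter_open Htop); auto|]. split; [auto|].
  intros z [Z1 Z2]. apply H1. rewrite !hF_of. unfold near, iota_tu, h1, h2, h3; simpl.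
  rewrite Rminus_diag, Rabs_R0. repeat split; auto.
Qed.

Lemma third_nbhd : free_nbhd_one tau (fun g => Rabs (h3 (hF iota_tu g)) < 1).
Proof.
  exists (op_h iota_tu). split; [apply op_h_group|]. split; [apply op_h_embed|].
  exists (fun g => Rabs (h3 (hF iota_tu g)) < 1). split.
  - intros g Hg. exists (1 - Rabs (h3 (hF iota_tu g))). split; [lra|].
    intros g' [_ [_ N3]]. pose proof (abs_tri (h3 (hF iota_tu g')) (h3 (hF iota_tu g)) 0) as T3.
    rewrite !Rminus_0_r in T3. lra.
  - split. + rewrite hF_one. unfold h3, hone; simpl. rewrite Rabs_R0; lra. + intros g Hg; auto.
Qed.

End Embed.
Arguments iota_tu {X} t u x.

From Coquelicot Require Import Coquelicot.
Require Import Defs.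

Section SeriesT.

Lemma geom_is (q : R) : 0 <= q < 1 -> is_series (fun n => q ^ n) (/ (1 - q)).
Proof. intro. apply is_series_geom. rewrite Rabs_pos_eq; lra. Qed.

Lemma ex_bounded (a : nat -> R) (q : R) : 0 <= q < 1 ->
  (forall n, Rabs (a n) <= q ^ n) -> ex_series a.
Proof.
  intros Hq Hb. apply (ex_series_le a (fun n => q ^ n)).
  - intro n. apply Hb.
  - eexists. apply geom_is; auto.
Qed.

Lemma Series_zero0 : Series (fun _ : nat => 0) = 0.
Proof.
  apply is_series_unique.
  assert (E : is_series (fun n => 0 * ((/4) ^ n)) (0 * / (1 - /4))).
  { apply (is_series_scal_l 0 (fun n => (/4) ^ n)). apply geom_is; lra. }
  rewrite Rmult_0_l in E. revert E. apply is_series_ext. intro n. apply Rmult_0_l.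
Qed.

Lemma pow_half_le1 n : (/2) ^ n <= 1.
Proof. rewrite <- (pow1 n). apply pow_incr. lra. Qed.

Lemma pow_half_pos n : 0 < (/2) ^ n.
Proof. apply pow_lt. lra. Qed.

Lemma pow_quarter n : (/4) ^ n = (/2) ^ n * (/2) ^ n.
Proof. rewrite <- Rpow_mult_distr. f_equal. field. Qed.

Lemma pow_half_mono K m : (K <= m)%nat -> (/2) ^ m <= (/2) ^ K.
Proof.
  intro Hm. replace m with (K + (m - K))%nat by lia. rewrite pow_add.
  pose proof (pow_half_le1 (m - K)). pose proof (pow_half_pos K). nra.
Qed.

Variable T : Type.
Variable tau : (T -> Prop) -> Prop.
Hypothesis Htop : is_topology tau.
Variable f : nat -> T -> R.
Hypothesis Hf01 : forall m z, 0 <= f m z <= 1.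
Hypothesis Hfc : forall m, continuous_real tau (f m).

Definition tser (z : T) : R := Series (fun m => (/4) ^ m * f m z).

Lemma tser_ex z : ex_series (fun m => (/4) ^ m * f m z).
Proof.
  apply (ex_bounded _ (/4)); [lra|]. intro n.
  pose proof (Hf01 n z). pose proof (pow_lt (/4) n ltac:(lra)).
  rewrite Rabs_mult, (Rabs_pos_eq ((/4)^n)) by lra. rewrite Rabs_pos_eq by lra. nra.
Qed.

Lemma tser_zero z : (forall m, f m z = 0) -> tser z = 0.
Proof.
  intro H0. unfold tser. rewrite (Series_ext _ (fun _ => 0)).
  - apply Series_zero0.
  - intro n. rewrite H0. ring.
Qed.

Lemma tser_pos z m : f m z = 1 -> 0 < tser z.
Proof.
  intro H1. unfold tser.
  rewrite (Series_incr_n _ (S m)); [|lia|apply tser_ex]. simpl pred.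
  assert (Hs : (/4) ^ m * f m z <= sum_f_R0 (fun m0 => (/4) ^ m0 * f m0 z) m).
  { destruct m as [|m']; simpl; [lra|].
    assert (0 <= sum_f_R0 (fun m0 => (/4) ^ m0 * f m0 z) m').
    { apply cond_pos_sum. intro n. pose proof (Hf01 n z). pose proof (pow_lt (/4) n ltac:(lra)). nra. }
    lra. }
  assert (Ht : 0 <= Series (fun k => (/4) ^ (S m + k) * f (S m + k)%nat z)).
  { rewrite <- Series_zero0.
    - apply Series_le.
      + intro n. pose proof (Hf01 (S m + n)%nat z). pose proof (pow_lt (/4) (S m + n) ltac:(lra)). nra.
      + apply (ex_bounded _ (/4)); [lra|]. intro n.
        pose proof (Hf01 (S m + n)%nat z). pose proof (pow_lt (/4) (S m + n) ltac:(lra)).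
        rewrite Rabs_mult, (Rabs_pos_eq ((/4)^(S m + n))) by lra. rewrite Rabs_pos_eq by lra.
        rewrite pow_add. pose proof (pow_lt (/4) n ltac:(lra)).
        assert (HA : (/4) ^ S m <= 1). { rewrite <- (pow1 (S m)). apply pow_incr. lra. }
        pose proof (pow_lt (/4) (S m) ltac:(lra)).
        assert (HB : (/4) ^ S m * f (S m + n)%nat z <= 1) by nra.
        replace ((/4) ^ S m * (/4) ^ n * f (S m + n)%nat z) with ((/4) ^ n * ((/4) ^ S m * f (S m + n)%nat z)) by ring.
        nra. }
  rewrite H1 in Hs. pose proof (pow_lt (/4) m ltac:(lra)). lra.
Qed.

Lemma tser_cont : continuous_real tau tser.
Proof.
  intros x eps Heps.
  destruct (pow_lt_1_zero (/2) ltac:(rewrite Rabs_pos_eq; lra) (eps / 4) ltac:(lra)) as [K HK].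
  specialize (HK K (le_n K)). rewrite Rabs_pos_eq in HK by (apply pow_le; lra).
  set (eta := eps / 4).
  destruct (fin_inter Htop x (fun m z => Rabs (f m z - f m x) < eta) K) as [W [HW [Wx HWq]]].
  { intros m _. destruct (Hfc m x eta ltac:(unfold eta; lra)) as [W [? [? ?]]]. exists W; auto. }
  exists W. split; auto. split; auto. intros z Wz.
  set (c := fun m => eta * (/4) ^ m + (/2) ^ K * (/2) ^ m).
  assert (Hc : is_series c (eta * / (1 - /4) + (/2) ^ K * / (1 - /2))).
  { apply (is_series_plus (fun m => eta * (/4) ^ m) (fun m => (/2) ^ K * (/2) ^ m)).
    - apply (is_series_scal_l eta (fun m => (/4) ^ m)). apply geom_is; lra.
    - apply (is_series_scal_l ((/2) ^ K) (fun m => (/2) ^ m)). apply geom_is; lra. }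
  set (d := fun m => (/4) ^ m * f m z - (/4) ^ m * f m x).
  assert (Hd : forall m, 0 <= Rabs (d m) <= c m).
  { intro m. split; [apply Rabs_pos|]. unfold d, c.
    replace ((/4) ^ m * f m z - (/4) ^ m * f m x) with ((/4) ^ m * (f m z - f m x)) by ring.
    rewrite Rabs_mult, (Rabs_pos_eq ((/4)^m)) by (apply pow_le; lra).
    pose proof (pow_half_pos m). pose proof (pow_half_pos K). rewrite pow_quarter.
    destruct (Nat.lt_ge_cases m K) as [Hm|Hm].
    - specialize (HWq z Wz m Hm). simpl in HWq. pose proof (pow_half_pos m).
      assert (0 <= (/2) ^ m * (/2) ^ m) by nra. pose proof (Rabs_pos (f m z - f m x)). nra.
    - pose proof (pow_half_mono K m Hm).
      assert (Rabs (f m z - f m x) <= 1).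
      { pose proof (Hf01 m z). pose proof (Hf01 m x). apply Rabs_le; lra. }
      assert (0 <= eta * ((/2) ^ m * (/2) ^ m)) by (unfold eta; nra).
      pose proof (Rabs_pos (f m z - f m x)). nra. }
  assert (Hexc : ex_series c) by (eexists; eauto).
  assert (Hexd : ex_series (fun m => Rabs (d m))).
  { apply (@ex_series_le R_AbsRing R_CompleteNormedModule _ c); auto. intro n. unfold norm; simpl. unfold abs; simpl.
    rewrite Rabs_Rabsolu. apply Hd. }
  unfold tser. rewrite <- Series_minus by apply tser_ex.
  eapply Rle_lt_trans; [apply Series_Rabs; auto|].
  eapply Rle_lt_trans; [apply Series_le; [apply Hd|auto]|].
  rewrite (is_series_unique _ _ Hc). unfold eta. lra.
Qed.

End SeriesT.
Require Import Defs.

Lemma FA_eq (X : Type) (u v : FA X) : proj1_sig u = proj1_sig v -> u = v.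
Proof.
  destruct u as [u Hu], v as [v Hv]; simpl. intros ->. f_equal. apply proof_irrelevance.
Qed.

Lemma conj_one (X : Type) (a p : X) :
  FA_mul (FA_mul (FA_mul (FA_inv (FA_of a)) (FA_inv (FA_of p))) (FA_of p)) (FA_of a) = FA_one X.
Proof.
  apply FA_eq. simpl. unfold flip; simpl.
  repeat (match goal with |- context [excluded_middle_informative ?P] =>
            let h := fresh "Hc" in destruct (excluded_middle_informative P) as [h|h] end; simpl in *;
          try unfold cancelsP in *; try unfold flip in *; simpl in *).
  all: try reflexivity.
  all: exfalso.
  all: match goal with
       | h : ~ (_ = _ /\ _ <> _) |- _ => apply h; split; [reflexivity|discriminate]
       | h : (_ = _ /\ ?b <> ?b) |- _ => destruct h as [_ h]; apply h; reflexivity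
       end.
Qed.

Fixpoint dec (f c : nat) : list nat :=
  match f with
  | O => nil
  | S f' => match c with
            | O => nil
            | S c' => let (x, r) := of_nat c' in x :: dec f' r
            end
  end.
Fixpoint code (l : list nat) : nat :=
  match l with nil => O | x :: l' => S (to_nat (x, code l')) end.
Lemma dec_code l f : (length l <= f)%nat -> dec f (code l) = l.
Proof.
  revert f; induction l as [|a l IH]; intros f Hf.
  - destruct f; reflexivity.
  - destruct f as [|f]; simpl in Hf; [lia|]. cbn [dec code]. rewrite cancel_of_to. f_equal. apply IH. lia.
Qed.
Definition enum (n : nat) : list nat := let (f, c) := of_nat n in dec f c.
Lemma enum_surj l : exists n, enum n = l.
Proof. exists (to_nat (length l, code l)). unfold enum. rewrite cancel_of_to. apply dec_code. lia. Qed.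

Definition prefix (al : nat -> nat) (k : nat) : list nat := map al (seq 0 k).
Definition extends (sg : list nat) (be : nat -> nat) : Prop :=
  forall i, (i < length sg)%nat -> be i = nth i sg 0%nat.
Lemma prefix_nth al k i : (i < k)%nat -> nth i (prefix al k) 0%nat = al i.
Proof.
  intro Hi. unfold prefix. rewrite (nth_indep _ 0%nat (al 0%nat)).
  - rewrite map_nth, seq_nth; auto.
  - rewrite length_map, length_seq; auto.
Qed.
Lemma prefix_len al k : length (prefix al k) = k.
Proof. unfold prefix. rewrite length_map, length_seq; auto. Qed.
Lemma extends_prefix al k : extends (prefix al k) al.
Proof. intros i Hi. rewrite prefix_len in Hi. rewrite prefix_nth; auto. Qed.

Lemma closed_compl (T : Type) (tau : (T -> Prop) -> Prop) (S : T -> Prop) :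
  is_topology tau -> tau S -> closed tau (fun x => ~ S x).
Proof.
  intros Htop HS. unfold closed. apply (open_local Htop). intros x Hx.
  exists S. split; auto. split; [apply NNPP; auto|]. intros z Hz Hn. auto.
Qed.

Section Main.
Variable X : Type.
Variable tau : (X -> Prop) -> Prop.
Hypothesis Htop : is_topology tau.
Hypothesis Hty : tychonoff tau.
Hypothesis Hcn : collectionwise_normal tau.
Variable s : nat -> X.
Variable p : X.
Hypothesis Hsp : forall n, s n <> p.
Hypothesis Hconv : converges tau s p.

Definition cc (a : X) (m : nat) : FA X :=
  FA_mul (FA_mul (FA_mul (FA_inv (FA_of a)) (FA_inv (FA_of p))) (FA_of (s m))) (FA_of a).

Lemma cc_conv (V : FA X -> Prop) : free_nbhd_one tau V ->
  forall a, exists N, forall m, (N <= m)%nat -> V (cc a m).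
Proof.
  intros [op [[Htopo [Hmul Hinv]] [Hemb [W [HW [We HWU]]]]]] a.
  rewrite <- (conj_one X a p) in We.
  destruct (Hmul _ _ W HW We) as [U1 [V1 [HU1 [HV1 [U1x [V1a Hp1]]]]]].
  destruct (Hmul _ _ U1 HU1 U1x) as [U2 [V2 [HU2 [HV2 [U2x [V2p Hp2]]]]]].
  destruct (Hconv _ (Hemb V2 HV2) V2p) as [N HN].
  exists N. intros m Hm. apply HWU. unfold cc. apply Hp1; [apply Hp2; [exact U2x | apply HN; auto] | exact V1a].
Qed.

Definition inS (x : X) : Prop := x = p \/ exists m, x = s m.

Lemma T1_tau : T1 tau.
Proof. destruct Hty; auto. Qed.

Lemma hausdorff_S (q : X) : ~ inS q -> exists O, tau O /\ O q /\ forall x, inS x -> ~ O x.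
Proof.
  intro Hq.
  assert (Hqp : q <> p) by (intro E; apply Hq; left; auto).
  destruct Hty as [HT1 Hcr].
  destruct (Hcr (fun x => x = q) p (singleton_closed Htop q HT1) (fun E => Hqp (eq_sym E)))
    as [f [fc [f01 [fp fq]]]].
  destruct (fc p (1/2) ltac:(lra)) as [W1 [HW1 [W1p Q1]]].
  destruct (fc q (1/2) ltac:(lra)) as [W2 [HW2 [W2q Q2]]].
  destruct (Hconv W1 HW1 W1p) as [N HN].
  destruct (fin_inter Htop q (fun m z => z <> s m) N) as [W3 [HW3 [W3q Q3]]].
  { intros m _. destruct (HT1 (s m) q) as [W [? [? ?]]].
    - intro E; apply Hq; right; exists m; auto.
    - exists W. split; auto. split; auto. intros z Wz E; subst; auto. }
  exists (fun z => W2 z /\ W3 z). split; [apply (inter_open Htop); auto|]. split; [auto|].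
  intros x [->|[m ->]] [O2 O3].
  - specialize (Q2 p O2). rewrite fp, (fq q eq_refl) in Q2.
    apply Rabs_def2 in Q2. lra.
  - destruct (Nat.lt_ge_cases m N) as [Hm|Hm].
    + apply (Q3 (s m) O3 m Hm). auto.
    + specialize (Q1 (s m) (HN m Hm)). specialize (Q2 (s m) O2).
      rewrite fp, Rminus_0_r in Q1. rewrite (fq q eq_refl) in Q2.
      assert (Ha : f (s m) < 1/2) by (apply Rabs_def2 in Q1; lra).
      assert (Hb : f (s m) > 1/2) by (apply Rabs_def2 in Q2; lra). lra.
Qed.


Variable U : (nat -> nat) -> FA X -> Prop.
Hypothesis HU1 : forall al, free_nbhd_one tau (U al).
Hypothesis HU2 : forall al be, (forall n, (al n <= be n)%nat) -> subset (U be) (U al).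
Variable A : X -> Prop.
Hypothesis HA : ~ countable A.
Hypothesis Hno : forall x, exists W, tau W /\ W x /\ forall z, W z -> A z -> z = x.

Definition A' (x : X) : Prop := A x /\ ~ inS x.

Lemma A'_unc : ~ countable A'.
Proof.
  intro Hc. apply HA.
  apply (@countable_union X A (fun n => match n with O => A' | 1 => fun x => x = p
                                  | S (S m) => fun x => x = s m end)).
  - intros [|[|m]]; auto; apply countable_single.
  - intros a Ha. destruct (classic (inS a)) as [[->|[m ->]]|Hn].
    + exists 1%nat; auto.
    + exists (S (S m)); auto.
    + exists O. split; auto.
Qed.

Definition D (sg : list nat) (g : FA X) : Prop := forall be, extends sg be -> U be g.
Definition B (sg : list nat) (a : X) : Prop := A' a /\ exists m, D sg (cc a m).
Definition big (n : nat) : Prop := ~ countable (B (enum n)).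

Definition pickb (n : nat) (L : list X) : X :=
  epsilon (inhabits p) (fun x => B (enum n) x /\ ~ In x L).
Fixpoint bs (n : nat) : list X :=
  match n with O => nil | S n' => pickb n' (bs n') :: bs n' end.
Definition b (n : nat) : X := pickb n (bs n).

Lemma b_in i n : (i < n)%nat -> In (b i) (bs n).
Proof.
  induction n as [|n IH]; intro Hi; [lia|]. simpl.
  destruct (Nat.eq_dec i n) as [->|Hne]; [left; reflexivity|]. right. apply IH. lia.
Qed.

Lemma b_spec n : big n -> B (enum n) (b n) /\ ~ In (b n) (bs n).
Proof.
  intro Hb. unfold b, pickb.
  apply (epsilon_spec (inhabits p) (fun x => B (enum n) x /\ ~ In x (bs n))).
  apply NNPP. intro Hne. apply Hb. apply (countable_list X (bs n)).
  intros x Hx. apply NNPP. intro Hn. apply Hne. exists x. auto.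
Qed.

Lemma b_inj i j : big i -> big j -> b i = b j -> i = j.
Proof.
  intros Hi Hj E. destruct (Nat.lt_total i j) as [H1|[H1|H1]]; auto.
  - exfalso. apply (proj2 (b_spec j Hj)). rewrite <- E. apply b_in; auto.
  - exfalso. apply (proj2 (b_spec i Hi)). rewrite E. apply b_in; auto.
Qed.

Definition mm (n : nat) : nat := epsilon (inhabits 0%nat) (fun m => D (enum n) (cc (b n) m)).
Lemma mm_spec n : big n -> D (enum n) (cc (b n) (mm n)).
Proof.
  intro Hb. destruct (proj1 (b_spec n Hb)) as [_ Hm].
  apply (epsilon_spec (inhabits 0%nat) (fun m => D (enum n) (cc (b n) m))). auto.
Qed.

Fixpoint mxf (bf : nat -> nat -> nat) (i n : nat) : nat :=
  match n with O => bf O i | S n' => Nat.max (mxf bf i n') (bf (S n') i) end.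
Lemma mxf_ge bf i k n : (k <= n)%nat -> (bf k i <= mxf bf i n)%nat.
Proof.
  induction n as [|n IH]; intro Hk.
  - assert (k = O) by lia. subst. simpl. lia.
  - simpl. destruct (Nat.eq_dec k (S n)) as [->|Hne]; [lia|]. specialize (IH ltac:(lia)). lia.
Qed.

Lemma cs_star (al : nat -> nat) a : A' a -> exists k, B (prefix al k) a.
Proof.
  intro Ha. apply NNPP. intro Hn.
  assert (Hk : forall k, exists be, extends (prefix al k) be /\ ~ U be (cc a k)).
  { intro k. apply NNPP. intro H1. apply Hn. exists k. split; auto. exists k.
    intros be Hbe. apply NNPP. intro H2. apply H1. exists be. auto. }
  assert (Hc : forall k, {be | extends (prefix al k) be /\ ~ U be (cc a k)})
    by (intro k; apply constructive_indefinite_description; auto).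
  set (bf := fun k => proj1_sig (Hc k)).
  set (ga := fun i => Nat.max (al i) (mxf bf i i)).
  assert (Hge : forall k i, (bf k i <= ga i)%nat).
  { intros k i. unfold ga. destruct (Nat.le_gt_cases k i) as [Hki|Hki].
    - pose proof (mxf_ge bf i k i Hki). lia.
    - assert (E : bf k i = al i).
      { unfold bf. destruct (proj2_sig (Hc k)) as [Hbe _].
        rewrite (Hbe i) by (rewrite prefix_len; auto). apply prefix_nth; auto. }
      lia. }
  destruct (cc_conv _ (HU1 ga) a) as [N HN].
  specialize (HN N (le_n N)).
  apply (HU2 (bf N) ga (Hge N)) in HN.
  unfold bf in HN. destruct (proj2_sig (Hc N)) as [_ Hnot]. auto.
Qed.

Lemma some_big (al : nat -> nat) : exists k, ~ countable (B (prefix al k)).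
Proof.
  apply NNPP. intro Hn. apply A'_unc.
  apply (@countable_union X A' (fun k => B (prefix al k))).
  - intro k. apply NNPP. intro H1. apply Hn. exists k. auto.
  - intros a Ha. apply cs_star. auto.
Qed.

Lemma h3_cc (t u : X -> R) a m : u p = 0 -> u (s m) = 0 ->
  h3 (hF (iota_tu t u) (cc a m)) = (t (s m) - t p) * u a.
Proof.
  intros E1 E2. unfold cc. rewrite !hF_mul, !hF_inv, !hF_of.
  unfold hmul, hinv, iota_tu, h1, h2, h3; simpl. rewrite E1, E2. ring.
Qed.

Lemma Fseq : exists F : nat -> X -> R, forall m, continuous_real tau (F m) /\
  (forall z, 0 <= F m z <= 1) /\ F m p = 0 /\ F m (s m) = 1.
Proof.
  destruct Hty as [HT1 Hcr].
  assert (Hc : forall m, {f | continuous_real tau f /\ (forall z, 0 <= f z <= 1) /\ f p = 0 /\ f (s m) = 1}).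
  { intro m. apply constructive_indefinite_description.
    destruct (Hcr (fun x => x = s m) p (singleton_closed Htop (s m) HT1) (fun E => Hsp m (eq_sym E)))
      as [f [H1 [H2 [H3 H4]]]].
    exists f. auto. }
  exists (fun m => proj1_sig (Hc m)). intro m. exact (proj2_sig (Hc m)).
Qed.

Lemma cont_1minus (f : X -> R) : continuous_real tau f -> continuous_real tau (fun x => 1 - f x).
Proof.
  intros Hf x e He. destruct (Hf x e He) as [W [? [? HW]]]. exists W. split; auto. split; auto.
  intros z Wz. replace (1 - f z - (1 - f x)) with (- (f z - f x)) by ring. rewrite Rabs_Ropp. auto.
Qed.

Lemma final_contra : (forall V, free_nbhd_one tau V -> exists al, subset (U al) V) -> False.
Proof.
  intro HU3.
  destruct Fseq as [F HF].
  set (t := tser X F).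
  assert (Ht : continuous_real tau t).
  { apply tser_cont; auto; intros; apply HF. }
  assert (Htp : t p = 0). { apply tser_zero. intro m. apply HF. }
  assert (Hts : forall m, 0 < t (s m)). { intro m. apply (tser_pos X F) with (m := m); [intros; apply HF| apply HF]. }
  set (Fam := fun n x => big n /\ x = b n).
  assert (Hcl : forall n, closed tau (Fam n)).
  { intro n. unfold closed. apply (open_local Htop). intros x Hx.
    destruct (classic (big n)) as [Hb|Hb].
    - destruct T1_tau with (x := b n) (y := x) as [W [HW [Wx Wb]]].
      { intro E. apply Hx. split; auto. }
      exists W. split; auto. split; auto. intros z Wz [_ E]. subst. auto.
    - exists (fun _ => True). split; [apply Htop|]. split; auto. intros z _ [Hb' _]. auto. }
  assert (Hdisc : discrete_family tau Fam).
  { intro x. destruct (Hno x) as [W [HW [Wx HWA]]]. exists W. split; auto. split; auto.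
    intros i j [z1 [W1 [Bi E1]]] [z2 [W2 [Bj E2]]]. subst.
    apply b_inj; auto.
    destruct (proj1 (b_spec i Bi)) as [[Ai _] _]. destruct (proj1 (b_spec j Bj)) as [[Aj _] _].
    rewrite (HWA _ W1 Ai), (HWA _ W2 Aj). auto. }
  destruct Hcn as [_ Hcw].
  destruct (Hcw nat Fam Hcl Hdisc) as [Vf [HVo [HVs HVd]]].
  assert (HO : forall n, exists O, big n -> tau O /\ O (b n) /\ forall x, inS x -> ~ O x).
  { intro n. destruct (classic (big n)) as [Hb|Hb].
    - destruct (proj1 (b_spec n Hb)) as [[_ HnS] _].
      destruct (hausdorff_S (b n) HnS) as [O HO]. exists O. auto.
    - exists (fun _ => True). tauto. }
  assert (HOc : forall n, {O | big n -> tau O /\ O (b n) /\ forall x, inS x -> ~ O x})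
    by (intro n; apply constructive_indefinite_description; auto).
  set (Of := fun n => proj1_sig (HOc n)).
  assert (HOf : forall n, big n -> tau (Of n) /\ Of n (b n) /\ forall x, inS x -> ~ Of n x)
    by (intro n; exact (proj2_sig (HOc n))).
  set (G := fun n x => Vf n x /\ Of n x /\ big n).
  assert (HGo : forall n, tau (G n)).
  { intro n. apply (open_local Htop). intros x [V1 [O1 Bn]].
    exists (fun z => Vf n z /\ Of n z). split; [apply (inter_open Htop); auto; apply HOf; auto|].
    split; [auto|]. intros z [? ?]. split; auto. }
  assert (Hg : forall n, exists g, continuous_real tau g /\ (big n -> g (b n) = 1) /\
                                   forall x, ~ G n x -> g x = 0).
  { intro n. destruct (classic (big n)) as [Hb|Hb].
    - destruct Hty as [_ Hcr].
      assert (Gb : G n (b n)).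
      { split; [apply HVs; split; auto|]. split; auto. apply HOf; auto. }
      destruct (Hcr (fun x => ~ G n x) (b n) (closed_compl _ tau _ Htop (HGo n)) (fun H0 => H0 Gb))
        as [f [fc [f01 [fb f1]]]].
      exists (fun x => 1 - f x). split; [apply cont_1minus; auto|]. split.
      + intros _. rewrite fb. ring.
      + intros x Hx. rewrite (f1 x Hx). ring.
    - exists (fun _ => 0). split.
      + intros x e He. exists (fun _ => True). split; [apply Htop|]. split; auto.
        intros. rewrite Rminus_diag, Rabs_R0. auto.
      + split; [tauto|]. auto. }
  assert (Hgc : forall n, {g | continuous_real tau g /\ (big n -> g (b n) = 1) /\
                                   forall x, ~ G n x -> g x = 0})
    by (intro n; apply constructive_indefinite_description; auto).
  set (gf := fun n => proj1_sig (Hgc n)).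
  assert (Hgf : forall n, continuous_real tau (gf n) /\ (big n -> gf n (b n) = 1) /\
                          forall x, ~ G n x -> gf n x = 0)
    by (intro n; exact (proj2_sig (Hgc n))).
  set (lam := fun n => / t (s (mm n))).
  assert (Guniq : forall i j x, G i x -> G j x -> i = j).
  { intros i j x [Vi _] [Vj _]. destruct (HVd x) as [W [_ [Wx HW]]].
    apply HW; exists x; auto. }
  set (u := fun x => match excluded_middle_informative (exists n, G n x) with
                     | left Hx => let n := proj1_sig (constructive_indefinite_description _ Hx) in
                                  lam n * gf n x
                     | right _ => 0 end).
  assert (u_eq : forall n x, G n x -> u x = lam n * gf n x).
  { intros n x Hn. unfold u. destruct (excluded_middle_informative _) as [Hx|Hx].
    - destruct (constructive_indefinite_description _ Hx) as [k Hk]. simpl.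
      rewrite (Guniq k n x Hk Hn). auto.
    - exfalso. apply Hx. exists n. auto. }
  assert (u_zero : forall x, (forall n, ~ G n x) -> u x = 0).
  { intros x Hx. unfold u. destruct (excluded_middle_informative _) as [[n Hn]|_]; auto.
    exfalso. apply (Hx n Hn). }
  assert (u_S : forall x, inS x -> u x = 0).
  { intros x Hx. apply u_zero. intros n [_ [O1 Bn]]. apply (proj2 (proj2 (HOf n Bn)) x Hx O1). }
  assert (u_b : forall n, big n -> u (b n) = lam n).
  { intros n Bn. rewrite (u_eq n).
    - rewrite (proj1 (proj2 (Hgf n)) Bn). ring.
    - split; [apply HVs; split; auto|]. split; auto. apply HOf; auto. }
  assert (Hu : continuous_real tau u).
  { intros x e He. destruct (HVd x) as [W0 [HW0 [W0x HWd]]].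
    destruct (classic (exists j z, W0 z /\ G j z)) as [[j [z0 [Wz0 Gz0]]]|Hnone].
    - assert (Hloc : forall z, W0 z -> u z = lam j * gf j z).
      { intros z Wz. destruct (classic (exists n, G n z)) as [[n Gn]|Hn].
        - assert (n = j).
          { apply HWd; [exists z; split; auto; apply Gn | exists z0; split; auto; apply Gz0]. }
          subst. apply u_eq; auto.
        - rewrite u_zero by (intros n Gn; apply Hn; exists n; auto).
          rewrite (proj2 (proj2 (Hgf j)) z) by (intro Gj; apply Hn; exists j; auto). ring. }
      destruct (proj1 (Hgf j) x (e / (Rabs (lam j) + 1)))
        as [W1 [HW1 [W1x Q1]]].
      { apply Rdiv_lt_0_compat; auto. pose proof (Rabs_pos (lam j)). lra. }
      exists (fun z => W0 z /\ W1 z). split; [apply (inter_open Htop); auto|]. split; [auto|].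
      intros z [Wz W1z]. rewrite (Hloc z Wz), (Hloc x W0x).
      replace (lam j * gf j z - lam j * gf j x) with (lam j * (gf j z - gf j x)) by ring.
      rewrite Rabs_mult. specialize (Q1 z W1z).
      pose proof (Rabs_pos (lam j)). pose proof (Rabs_pos (gf j z - gf j x)).
      assert (Hk : Rabs (lam j) * Rabs (gf j z - gf j x) <= Rabs (lam j) * (e / (Rabs (lam j) + 1)))
        by (apply Rmult_le_compat_l; lra).
      assert (Rabs (lam j) * (e / (Rabs (lam j) + 1)) < e).
      { unfold Rdiv. replace (Rabs (lam j) * (e * / (Rabs (lam j) + 1))) with
          (e * (Rabs (lam j) / (Rabs (lam j) + 1))) by (field; lra).
        assert (Rabs (lam j) / (Rabs (lam j) + 1) < 1).
        { apply Rmult_lt_reg_r with (r := Rabs (lam j) + 1); [lra|].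
          unfold Rdiv. rewrite Rmult_assoc, Rinv_l by lra. lra. }
        nra. }
      lra.
    - exists W0. split; auto. split; auto. intros z Wz.
      rewrite !u_zero; [rewrite Rminus_diag, Rabs_R0; auto| |].
      + intros n Gn. apply Hnone. exists n, x. auto.
      + intros n Gn. apply Hnone. exists n, z. auto. }
  set (V := fun g => Rabs (h3 (hF (iota_tu t u) g)) < 1).
  destruct (HU3 V (third_nbhd X tau Htop t u Ht Hu)) as [al Hal].
  destruct (some_big al) as [k Hk].
  destruct (enum_surj (prefix al k)) as [n En].
  assert (Bn : big n) by (unfold big; rewrite En; auto).
  pose proof (mm_spec n Bn) as Hm.
  assert (HV : V (cc (b n) (mm n))).
  { apply Hal. apply Hm. rewrite En. apply extends_prefix. }
  unfold V in HV. rewrite h3_cc in HV.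
  - rewrite Htp, u_b in HV by auto. unfold lam in HV.
    rewrite Rminus_0_r, Rinv_r in HV by (pose proof (Hts (mm n)); lra).
    rewrite Rabs_R1 in HV. lra.
  - apply u_S. left; auto.
  - apply u_S. right. exists (mm n). auto.
Qed.

End Main.

Theorem theorem4p10 (X : Type) (tau : (X -> Prop) -> Prop) :
  is_topology tau ->
  tychonoff tau ->
  collectionwise_normal tau ->
  has_nontrivial_convergent_seq tau ->
  free_group_has_G_base tau ->
  aleph1_compact tau.
Proof.
  intros Htop Hty Hcn [s [p [_ [Hsp Hconv]]]] [U [HU1 [HU2 HU3]]] A HA.
  apply NNPP. intro Hno0.
  assert (Hno : forall x, exists W, tau W /\ W x /\ forall z, W z -> A z -> z = x).
  { intro x. apply NNPP. intro H1. apply Hno0. exists x. intros W HW Wx.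
    apply NNPP. intro H2. apply H1. exists W. split; auto. split; auto.
    intros z Wz Az. apply NNPP. intro Hne. apply H2. exists z. auto. }
  exact (final_contra X tau Htop Hty Hcn s p Hsp Hconv U HU1 HU2 A HA Hno HU3).
Qed.
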